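(* Let $T_C$ and $\mathcal{C}$ be as in the context, and write an element of $\mathcal{C}$ as $[q_0,\dots,q_{m-1},q_m]$. (a) The $LR$-location of $[q_0,\dots,q_{m-1},q_m]$ in $T_C$ is the string $f([q_0,\dots,q_m])=S(q_0,\dots,q_{m-1},q_m-1)$. (b) If $q_0,\dots,q_{m-1}$ are fixed, then the rational value of $[q_0,\dots,q_{m-1},q_m]\in\mathcal{C}$ is an increasing function of $q_m$ if $m$ is even and a decreasing function of $q_m$ if $m$ is odd. (c) The map $f\colon\mathcal{C}\to\{L,R\}^*$ is a bijection which preserves level (the level of $v$ in $T_C$ equals $|f(v)|$), children ($f$ of the left child of $v$ is $f(v)L$, $f$ of the right child is $f(v)R$), and order ($v<v'$ as rational numbers if and only if $r(f(v))<r(f(v'))$). (d) Let $v\in\mathcal{C}$ have level $\ell$, and let $A$ be the set of values of the vertices of $T_C$ of level less than $\ell$ together with $0$ and $\infty$. Then the left parent of $v$ is the largest element of $A$ smaller than $v$, and the right parent of $v$ is the smallest element of $A$ larger than $v$; i.e. the two parents of $v$ are the two closest lower-level approximations to $v$ from below and above.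
   Context: For integers $q_0\geq0$, $q_1,\dots,q_m\geq1$, the continued fraction $[q_0,\dots,q_m]$ denotes the rational $q_0+1/(q_1+1/(\cdots+1/q_m))$, computed by $[q_0]=q_0$ and $[q_0,\dots,q_{m-1},q_m]=[q_0,\dots,q_{m-2},q_{m-1}+1/q_m]$. $T_C$ is the infinite complete binary tree whose vertices are labelled by finite sequences $[q_0,\dots,q_m]$, defined as follows: the root is $[1]$; for a vertex $[q_0,\dots,q_{m-1},q_m]$, if $m$ is even its left child is $[q_0,\dots,q_{m-1},q_m-1,2]$ and its right child is $[q_0,\dots,q_{m-1},q_m+1]$; if $m$ is odd its left child is $[q_0,\dots,q_{m-1},q_m+1]$ and its right child is $[q_0,\dots,q_{m-1},q_m-1,2]$. (All vertices have $q_0\geq0$, $q_1,\dots,q_{m-1}\geq1$, and $q_m\geq2$ if $m>0$.) $\mathcal{C}$ is the set of vertices of $T_C$, ordered by their rational values. The level of a vertex is its distance from the root. $\{L,R\}^*$ is the free monoid on $L,R$ (strings), empty string $\varepsilon$, $|S|$ = number of symbols. The $LR$-location of a vertex is the string of left ($L$) and right ($R$) moves on the path from the root to it. For $k_0\geq0$, $k_1,\dots,k_m\geq1$ (last exponent allowed to be $0$, in which case that block is omitted), $S(k_0,\dots,k_m)$ is the string $R^{k_0}L^{k_1}R^{k_2}\cdots$ with alternating blocks. Define $f([q_0,\dots,q_{m-1},q_m])=S(q_0,\dots,q_{m-1},q_m-1)$. Define $r(\varepsilon)=1$, $r(SL)=r(S)-2^{-|SL|}$, $r(SR)=r(S)+2^{-|SR|}$.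 Parents of a string $S$: $P_L(S)=SR^{-1}$, $P_R(S)=SL^{-1}$, evaluated recursively by $LL^{-1}=\varepsilon$, $RR^{-1}=\varepsilon$, $LR^{-1}=R^{-1}$, $RL^{-1}=L^{-1}$ (and $\varepsilon R^{-1}=R^{-1}$, $\varepsilon L^{-1}=L^{-1}$). The left (resp. right) parent of a vertex $v\in\mathcal{C}$ with $LR$-location $S$ is the vertex with $LR$-location $P_L(S)$ (resp. $P_R(S)$), where the generalized string $R^{-1}$ corresponds to the continued fraction $[0]=0$ and $L^{-1}$ corresponds to the empty continued fraction $[\,]=\infty$. *)

(* Defs.v *)
From mathcomp Require Import all_boot all_order all_algebra.
Set Implicit Arguments. Unset Strict Implicit. Unset Printing Implicit Defensive.
Import Order.TTheory GRing.Theory Num.Theory.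
Local Open Scope ring_scope.

Inductive dir := Lm | Rm.

Fixpoint cf (s : seq nat) : rat :=
  match s with
  | [::] => 0
  | [:: q] => q%:R
  | q :: s' => q%:R + (cf s')^-1
  end.

Definition tC_child (d : dir) (v : seq nat) : seq nat :=
  let m := (size v).-1 in
  let p := take m v in
  let qm := last 0%N v in
  let inc := p ++ [:: qm.+1] in
  let spl := p ++ [:: qm.-1; 2%N] in
  match d, odd m with
  | Lm, false => spl
  | Rm, false => inc
  | Lm, true => inc
  | Rm, true => spl
  end.

Definition tC_label (S : seq dir) : seq nat := foldl (fun v d => tC_child d v) [:: 1%N] S.

Definition inC (v : seq nat) : Prop := exists S, tC_label S = v.

Fixpoint Sblocks (b : dir) (ks : seq nat) : seq dir :=
  match ks with
  | [::] => [::]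
  | k :: ks' => nseq k b ++ Sblocks (if b is Rm then Lm else Rm) ks'
  end.
Definition Sstr (ks : seq nat) : seq dir := Sblocks Rm ks.

Definition fC (v : seq nat) : seq dir :=
  Sstr (take (size v).-1 v ++ [:: (last 0%N v).-1]).

(* r(eps)=1, r(SL)=r(S)-2^{-|SL|}, r(SR)=r(S)+2^{-|SR|} *)
Fixpoint r_aux (k : nat) (s : seq dir) : rat :=
  match s with
  | [::] => 0
  | d :: s' => (if d is Lm then -1 else 1) * ((2%:R : rat) ^+ k.+1)^-1 + r_aux k.+1 s'
  end.
Definition rS (s : seq dir) : rat := 1 + r_aux 0 s.

(* Generalized strings: ordinary strings, R^{-1} (value [0]=0), L^{-1} (value [ ]=oo) *)
Inductive gstr := GStr of seq dir | RInv | LInv.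

Fixpoint PL_rev (s : seq dir) : gstr :=
  match s with
  | [::] => RInv
  | Rm :: s' => GStr (rev s')
  | Lm :: s' => PL_rev s'
  end.
Fixpoint PR_rev (s : seq dir) : gstr :=
  match s with
  | [::] => LInv
  | Lm :: s' => GStr (rev s')
  | Rm :: s' => PR_rev s'
  end.
Definition P_L (S : seq dir) : gstr := PL_rev (rev S).
Definition P_R (S : seq dir) : gstr := PR_rev (rev S).

Inductive extQ := Fin of rat | Infty.
Definition ltE (a b : extQ) : Prop :=
  match a, b with
  | Fin x, Fin y => x < y
  | Fin _, Infty => True
  | Infty, _ => False
  end.
Definition leE (a b : extQ) : Prop := a = b \/ ltE a b.

Definition gval (g : gstr) : extQ :=
  match g with
  | GStr T => Fin (cf (tC_label T))
  | RInv => Fin 0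
  | LInv => Infty
  end.

Definition inA (l : nat) (a : extQ) : Prop :=
  a = Fin 0 \/ a = Infty \/ exists T : seq dir, (size T < l)%N /\ a = Fin (cf (tC_label T)).

(* Main.v *)
Require Import Defs.
From mathcomp Require Import all_boot all_order all_algebra.
From mathcomp Require Import ring lra zify.
Import Order.TTheory GRing.Theory Num.Theory.
Local Open Scope ring_scope.

Definition flip (d : dir) := if d is Rm then Lm else Rm.

Lemma Sblocks_cons b k ks : Sblocks b (k :: ks) = nseq k b ++ Sblocks (flip b) ks.
Proof. by []. Qed.

Lemma Sblocks_cat ks ls b :
  Sblocks b (ks ++ ls) = Sblocks b ks ++ Sblocks (iter (size ks) flip b) ls.
Proof.
elim: ks b => [|k ks IH] b //=.
rewrite -!/(flip b) IH catA; congr (_ ++ Sblocks _ _).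
by rewrite -iterSr.
Qed.

Lemma iter_flip n : iter n flip Rm = if odd n then Lm else Rm.
Proof. by elim: n => [|n IH] //=; rewrite IH; case: (odd n). Qed.

Lemma label_rcons S d : tC_label (rcons S d) = tC_child d (tC_label S).
Proof. by rewrite /tC_label foldl_rcons. Qed.

Lemma child_rcons d p q :
  tC_child d (rcons p q) =
  match d, odd (size p) with
  | Lm, false => p ++ [:: q.-1; 2%N]
  | Rm, false => rcons p q.+1
  | Lm, true => rcons p q.+1
  | Rm, true => p ++ [:: q.-1; 2%N]
  end.
Proof.
rewrite /tC_child size_rcons /= -cats1 (take_size_cat _ (erefl _)).
rewrite last_cat /= -!cats1.
by case: d; case: (odd (size p)).
Qed.

Lemma label_shape S : exists p q, tC_label S = rcons p q /\ (0 < q)%N.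
Proof.
elim/last_ind: S => [|S d [p [q [E Hq]]]]; first by exists [::], 1%N.
rewrite label_rcons E child_rcons.
case: d; case: (odd (size p)).
- by exists p, q.+1.
- by exists (rcons p q.-1), 2%N; rewrite -!cats1 -catA.
- by exists (rcons p q.-1), 2%N; rewrite -!cats1 -catA.
- by exists p, q.+1.
Qed.

Lemma fC_rcons p q : fC (rcons p q) = Sstr (rcons p q.-1).
Proof.
rewrite /fC size_rcons /= -cats1 (take_size_cat _ (erefl _)).
by rewrite last_cat cats1.
Qed.

Lemma nseqSr (T : Type) n (x : T) : nseq n.+1 x = rcons (nseq n x) x.
Proof. by elim: n => //= n ->. Qed.

Lemma fC_child d p q : (0 < q)%N ->
  fC (tC_child d (rcons p q)) = rcons (fC (rcons p q)) d.
Proof.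
move=> Hq; rewrite child_rcons fC_rcons /Sstr.
have H1 : Sblocks Rm (rcons p q) = rcons (Sblocks Rm (rcons p q.-1))
           (if odd (size p) then Lm else Rm).
  rewrite -!cats1 !Sblocks_cat iter_flip /=.
  case: q Hq => // q _ /=; rewrite !cats0 -catA cats1 -nseqSr; by case: (odd (size p)).
have H2 : Sblocks Rm (rcons (rcons p q.-1) 1%N) = rcons (Sblocks Rm (rcons p q.-1))
           (if odd (size p) then Rm else Lm).
  rewrite -[rcons (rcons p _) _]cats1 Sblocks_cat size_rcons iter_flip /=.
  by rewrite cats1; case: (odd (size p)).
case: d; case E: (odd (size p)) => /=.
- by rewrite fC_rcons /Sstr H1 E.
- rewrite -[p ++ _]/(p ++ [:: q.-1] ++ [:: 2%N]) catA cats1 fC_rcons /Sstr /=.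
  by rewrite cats1 H2 E.
- rewrite -[p ++ _]/(p ++ [:: q.-1] ++ [:: 2%N]) catA cats1 fC_rcons /Sstr /=.
  by rewrite cats1 H2 E.
- by rewrite fC_rcons /Sstr H1 E.
Qed.

Lemma partA S : fC (tC_label S) = S.
Proof.
elim/last_ind: S => [|S d IH] //.
have [p [q [E Hq]]] := label_shape S.
by rewrite label_rcons E fC_child // -E IH.
Qed.
Record M4 := mk4 { e11 : nat; e12 : nat; e21 : nat; e22 : nat }.
Definition sbstep (M : M4) (d : dir) : M4 :=
  let: mk4 a b c e := M in
  if d is Lm then mk4 (a + b) b (c + e) e else mk4 a (a + b) c (c + e).
Definition SB (S : seq dir) := foldl sbstep (mk4 1 0 0 1) S.
Definition Kmul (q : nat) (N : M4) :=
  let: mk4 A B C D := N in mk4 (q * A + C) (q * B + D) A B.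
Definition Nmat (p : seq nat) := foldr Kmul (mk4 1 0 0 1) p.
Definition mulK (N : M4) (x : nat) :=
  let: mk4 A B C D := N in mk4 (A * x + B) A (C * x + D) C.
Definition feven (N : M4) (q : nat) :=
  let: mk4 A B C D := N in mk4 A (A * q.-1 + B) C (C * q.-1 + D).
Definition fodd (N : M4) (q : nat) :=
  let: mk4 A B C D := N in mk4 (B + A * q.-1) A (D + C * q.-1) C.

Lemma Nmat_rcons p x : Nmat (rcons p x) = mulK (Nmat p) x.
Proof.
elim: p => [|q p IH] /=; first by congr mk4; ring.
rewrite IH; case: (Nmat p) => A B C D /=; congr mk4; ring.
Qed.

Lemma SB_rcons S d : SB (rcons S d) = sbstep (SB S) d.
Proof. by rewrite /SB foldl_rcons. Qed.

Lemma inv_SB S : exists p q, tC_label S = rcons p q /\ (0 < q)%N /\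
  SB S = (if odd (size p) then fodd else feven) (Nmat p) q.
Proof.
elim/last_ind: S => [|S d [p [q [E [Hq HS]]]]]; first by exists [::], 1%N.
rewrite label_rcons E child_rcons SB_rcons HS.
case: q Hq E HS => // q _ E HS /=.
have Hspl : p ++ [:: q; 2%N] = rcons (rcons p q) 2%N by rewrite -!cats1 -catA.
case: d; case O: (odd (size p)).
- exists p, q.+2; split => //; split => //; rewrite O.
  by case: (Nmat p) => A B C D /=; congr mk4; ring.
- exists (rcons p q), 2%N; rewrite Hspl; split => //; split => //.
  rewrite size_rcons /= O Nmat_rcons.
  by case: (Nmat p) => A B C D /=; congr mk4; ring.
- exists (rcons p q), 2%N; rewrite Hspl; split => //; split => //.
  rewrite size_rcons /= O Nmat_rcons.
  by case: (Nmat p) => A B C D /=; congr mk4; ring.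
- exists p, q.+2; split => //; split => //; rewrite O.
  by case: (Nmat p) => A B C D /=; congr mk4; ring.
Qed.

Definition cfx (p : seq nat) (x : rat) : rat := foldr (fun q y => q%:R + y^-1) x p.

Lemma cf_rcons p q : cf (rcons p q) = cfx p q%:R.
Proof.
elim: p => [|a p IH] //=.
case E: (rcons p q) => [|h t]; first by case: (p) E.
by rewrite -E IH.
Qed.

Lemma mobius p x : 0 < x ->
  let: mk4 A B C D := Nmat p in
  0 < A%:R * x + B%:R /\ 0 < C%:R * x + D%:R /\
  cfx p x = (A%:R * x + B%:R) / (C%:R * x + D%:R).
Proof.
move=> Hx; elim: p => [|q p IH] /=.
  by rewrite !mul1r !mul0r !addr0 !add0r divr1.
move: IH; case: (Nmat p) => A B C D [H1 [H2 ->]] /=.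
rewrite !natrD !natrM.
split; last split => //.
- have H0 : 0 <= q%:R * (A%:R * x + B%:R) :> rat by rewrite mulr_ge0 // ltW.
  have -> : (q%:R * A%:R + C%:R) * x + (q%:R * B%:R + D%:R) =
            q%:R * (A%:R * x + B%:R) + (C%:R * x + D%:R) :> rat by ring.
  by rewrite (le_lt_trans _ (ltr_wpDl H0 H2)).
- rewrite invf_div; field.
  by rewrite gt_eqF.
Qed.

Lemma cf_label S : cf (tC_label S) =
  (e11 (SB S) + e12 (SB S))%:R / (e21 (SB S) + e22 (SB S))%:R.
Proof.
have [p [q [E [Hq HS]]]] := inv_SB S.
rewrite E cf_rcons HS.
case: q Hq E HS => // q _ E HS.
have := @mobius p q.+1%:R (ltr0Sn _ q).
case: (Nmat p) => A B C D [_ [_ ->]].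
case: (odd (size p)) => /=; congr (_ / _); rewrite !natrD !natrM -addn1 natrD; ring.
Qed.

Lemma SB_det S : (e11 (SB S) * e22 (SB S) = e12 (SB S) * e21 (SB S) + 1)%N /\
  (0 < e22 (SB S))%N /\ (0 < e11 (SB S))%N.
Proof.
elim/last_ind: S => [|S d]; first by [].
rewrite SB_rcons; case: (SB S) => a b c e /= [H1 [H2 H3]].
case: d => /=; split; try split; nia.
Qed.

Lemma PL_val S : gval (P_L S) = Fin ((e12 (SB S))%:R / (e22 (SB S))%:R).
Proof.
elim/last_ind: S => [|S d IH]; first by rewrite /= mul0r.
rewrite /P_L rev_rcons SB_rcons; case: d => /=.
  by move: IH; rewrite /P_L; case: (SB S).
by rewrite revK cf_label; case: (SB S).
Qed.

Lemma PR_val S : gval (P_R S) =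
  if e21 (SB S) == 0%N then Infty else Fin ((e11 (SB S))%:R / (e21 (SB S))%:R).
Proof.
elim/last_ind: S => [|S d IH]; first by [].
rewrite /P_R rev_rcons SB_rcons; case: d => /=.
  rewrite revK cf_label; have := SB_det S; case: (SB S) => a b c e /= [_ [He _]].
  by rewrite addn_eq0 (gtn_eqF He) andbF.
by move: IH; rewrite /P_R; case: (SB S).
Qed.

Lemma local S : ltE (gval (P_L S)) (Fin (cf (tC_label S))) /\
                ltE (Fin (cf (tC_label S))) (gval (P_R S)).
Proof.
rewrite PL_val PR_val cf_label.
have := SB_det S; case: (SB S) => a b c e /= [H1 [H2 H3]].
have Hce : (0 < c + e)%N by lia.
split.
  rewrite ltr_pdivrMr ?ltr0n // mulrAC ltr_pdivlMr ?ltr0n //.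
  by rewrite -!natrM ltr_nat; nia.
case: ifP => [//|/negbT Hc] /=.
rewrite ltr_pdivrMr ?ltr0n // mulrAC ltr_pdivlMr ?ltr0n ?lt0n //.
by rewrite -!natrM ltr_nat; nia.
Qed.

Definition val S := cf (tC_label S).

Lemma ltE_trans a b c : ltE a b -> ltE b c -> ltE a c.
Proof.
case: a => [x|] //; case: b => [y|] //; case: c => [z|] //=.
exact: lt_trans.
Qed.

Lemma PL_L S : P_L (rcons S Lm) = P_L S.
Proof. by rewrite /P_L rev_rcons. Qed.
Lemma PL_R S : P_L (rcons S Rm) = GStr S.
Proof. by rewrite /P_L rev_rcons /= revK. Qed.
Lemma PR_R S : P_R (rcons S Rm) = P_R S.
Proof. by rewrite /P_R rev_rcons. Qed.
Lemma PR_L S : P_R (rcons S Lm) = GStr S.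
Proof. by rewrite /P_R rev_rcons /= revK. Qed.

Lemma interval X S : ltE (gval (P_L S)) (Fin (val (S ++ X))) /\
                     ltE (Fin (val (S ++ X))) (gval (P_R S)).
Proof.
elim: X S => [|d X IH] S; first by rewrite cats0; exact: local.
rewrite -cat_rcons; have [H1 H2] := IH (rcons S d).
have [L1 L2] := local S.
case: d H1 H2 => [|]; rewrite ?PL_L ?PR_L ?PL_R ?PR_R => H1 H2; split => //.
- exact: (@ltE_trans _ (Fin (val S)) _ H2 L2).
- exact: (@ltE_trans _ (Fin (val S)) _ L1 H1).
Qed.

Lemma left_sub S X : val (rcons S Lm ++ X) < val S.
Proof. by have [_ ] := interval X (rcons S Lm); rewrite PR_L. Qed.
Lemma right_sub S X : val S < val (rcons S Rm ++ X).
Proof. by have [H _] := interval X (rcons S Rm); rewrite PL_R in H. Qed.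

Lemma val_pos S : 0 < val S.
Proof. by have [H _] := interval S [::]. Qed.

Definition lt_in (T S : seq dir) : Prop :=
  exists P X Y, (T = P ++ Lm :: X /\ S = P ++ Rm :: Y) \/
                (T = P ++ Lm :: X /\ S = P) \/ (T = P /\ S = P ++ Rm :: Y).

Lemma lt_in_val T S : lt_in T S -> val T < val S.
Proof.
move=> [P [X [Y [[-> ->]|[[-> ->]|[-> ->]]]]]]; rewrite -?cat_rcons.
- exact: lt_trans (left_sub _ _) (right_sub _ _).
- exact: left_sub.
- exact: right_sub.
Qed.

Lemma lt_in_cons t T S : lt_in T S -> lt_in (t :: T) (t :: S).
Proof.
move=> [P [X [Y H]]]; exists (t :: P), X, Y.
by case: H => [[-> ->]|[[-> ->]|[-> ->]]]; [left|right;left|right;right].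
Qed.

Lemma lt_in_total T S : T <> S -> lt_in T S \/ lt_in S T.
Proof.
elim: T S => [|t T IH] [|s S] H.
- by case: H.
- case: s H => H.
  + by right; exists [::], S, S; right; left.
  + by left; exists [::], S, S; right; right.
- case: t H => H.
  + by left; exists [::], T, T; right; left.
  + by right; exists [::], T, T; right; right.
- case: t s H => [] [] H.
  + have [E|?|?] := IH S; [by case: H; rewrite E| | ].
    * by left; apply: lt_in_cons.
    * by right; apply: lt_in_cons.
  + by left; exists [::], T, S; left.
  + by right; exists [::], S, T; left.
  + have [E|?|?] := IH S; [by case: H; rewrite E| | ].
    * by left; apply: lt_in_cons.
    * by right; apply: lt_in_cons.
Qed.

Definition w2 (k : nat) : rat := ((2%:R : rat) ^+ k)^-1.

Lemma w2S k : w2 k = w2 k.+1 + w2 k.+1.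
Proof.
rewrite /w2 exprS invfM.
have H : (2%:R : rat) != 0 by [].
by set y := (_ ^+ k)^-1; field.
Qed.

Lemma w2_pos k : 0 < w2 k.
Proof. by rewrite /w2 invr_gt0 exprn_gt0. Qed.

Lemma r_bound X k : - w2 k < r_aux k X < w2 k.
Proof.
elim: X k => [|d X IH] k /=.
  by rewrite oppr_lt0 w2_pos.
have /andP [H1 H2] := IH k.+1.
rewrite -/(w2 k.+1) w2S.
case: d => /=; apply/andP; split; lra.
Qed.

Lemma r_L k X : r_aux k (Lm :: X) < 0.
Proof.
have /andP [_ H2] := r_bound X k.+1.
by rewrite /= -/(w2 k.+1); lra.
Qed.

Lemma r_R k X : 0 < r_aux k (Rm :: X).
Proof.
have /andP [H1 _] := r_bound X k.+1.
by rewrite /= -/(w2 k.+1); lra.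
Qed.

Lemma r_cat P X k : r_aux k (P ++ X) = r_aux k P + r_aux (k + size P) X.
Proof.
elim: P k => [|d P IH] k /=; first by rewrite add0r addn0.
by rewrite IH addrA addSnnS.
Qed.

Lemma lt_in_r T S : lt_in T S -> rS T < rS S.
Proof.
rewrite /rS ltrD2l.
move=> [P [X [Y [[-> ->]|[[-> ->]|[-> ->]]]]]]; rewrite ?r_cat ?ltrD2l.
- exact: lt_trans (r_L _ _) (r_R _ _).
- by rewrite -[X in _ < X]addr0 ltrD2l r_L.
- by rewrite -[X in X < _]addr0 ltrD2l r_R.
Qed.

Lemma PL_shape S : (P_L S = RInv /\ exists k, S = nseq k Lm) \/
  exists P k, P_L S = GStr P /\ S = P ++ Rm :: nseq k Lm.
Proof.
elim/last_ind: S => [|S d IH]; first by left; split => //; exists 0%N.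
case: d.
- rewrite PL_L; case: IH => [[H [k Ek]]|[P [k [H Ek]]]].
  + by left; split => //; exists k.+1; rewrite Ek nseqSr.
  + by right; exists P, k.+1; split => //; rewrite Ek rcons_cat rcons_cons -nseqSr.
- by right; exists S, 0%N; rewrite PL_R cats1.
Qed.

Lemma PR_shape S : (P_R S = LInv /\ exists k, S = nseq k Rm) \/
  exists P k, P_R S = GStr P /\ S = P ++ Lm :: nseq k Rm.
Proof.
elim/last_ind: S => [|S d IH]; first by left; split => //; exists 0%N.
case: d.
- by right; exists S, 0%N; rewrite PR_L cats1.
- rewrite PR_R; case: IH => [[H [k Ek]]|[P [k [H Ek]]]].
  + by left; split => //; exists k.+1; rewrite Ek nseqSr.
  + by right; exists P, k.+1; split => //; rewrite Ek rcons_cat rcons_cons -nseqSr.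
Qed.

Lemma no_d_nseq (d d' : dir) Q Y k : d <> d' -> Q ++ d :: Y <> nseq k d'.
Proof.
move=> Hd; elim: Q k => [|q Q IH] [|k] //=.
- by case=> E _; apply: Hd E.
- by case=> _ E; apply: (IH k) E.
Qed.

Lemma split_eq (d d' : dir) Q Y P k : d <> d' ->
  Q ++ d :: Y = P ++ d :: nseq k d' -> Q = P \/ exists Y', P = Q ++ d :: Y'.
Proof.
move=> Hd; elim: Q P => [|q Q IH] [|p P] /=.
- by left.
- by case=> <- _; right; exists P.
- by case=> _ E; case: (@no_d_nseq d d' Q Y k Hd E).
- case=> <- E; case: (IH P E) => [->|[Y' ->]]; first by left.
  by right; exists Y'.
Qed.

Lemma closest_L S T : lt_in T S -> (size T < size S)%N ->
  exists P, P_L S = GStr P /\ (T = P \/ lt_in T P).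
Proof.
move=> [Q [X [Y HT]]] Hs.
case: HT => [[ET ES]|[[ET ES]|[ET ES]]].
- case: (PL_shape S) => [[_ [k Ek]]|[P [k [HP EP]]]].
    by case: (@no_d_nseq Rm Lm Q Y k) => //; rewrite -ES Ek.
  exists P; split => //; right.
  case: (@split_eq Rm Lm Q Y P k) => //; first by rewrite -ES EP.
    by move=> EQ; exists P, X, X; right; left; rewrite ET EQ.
  by move=> [Y' EY]; exists Q, X, Y'; left.
- by move: Hs; rewrite ET ES size_cat /=; lia.
- case: (PL_shape S) => [[_ [k Ek]]|[P [k [HP EP]]]].
    by case: (@no_d_nseq Rm Lm Q Y k) => //; rewrite -ES Ek.
  exists P; split => //.
  case: (@split_eq Rm Lm Q Y P k) => //; first by rewrite -ES EP.
    by move=> EQ; left; rewrite ET EQ.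
  by move=> [Y' EY]; right; exists Q, X, Y'; right; right.
Qed.

Lemma closest_R S T : lt_in S T -> (size T < size S)%N ->
  exists P, P_R S = GStr P /\ (T = P \/ lt_in P T).
Proof.
move=> [Q [X [Y HT]]] Hs.
case: HT => [[ES ET]|[[ES ET]|[ES ET]]].
- case: (PR_shape S) => [[_ [k Ek]]|[P [k [HP EP]]]].
    by case: (@no_d_nseq Lm Rm Q X k) => //; rewrite -ES Ek.
  exists P; split => //; right.
  case: (@split_eq Lm Rm Q X P k) => //; first by rewrite -ES EP.
    by move=> EQ; exists P, Y, Y; right; right; rewrite ET EQ.
  by move=> [Y' EY]; exists Q, Y', Y; left.
- case: (PR_shape S) => [[_ [k Ek]]|[P [k [HP EP]]]].
    by case: (@no_d_nseq Lm Rm Q X k) => //; rewrite -ES Ek.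
  exists P; split => //.
  case: (@split_eq Lm Rm Q X P k) => //; first by rewrite -ES EP.
    by move=> EQ; left; rewrite ET EQ.
  by move=> [Y' EY]; right; exists Q, Y', Y; right; left.
- by move: Hs; rewrite ET ES size_cat /=; lia.
Qed.

Lemma cfx_mono p x y : 0 < x -> x < y -> 0 < cfx p x /\ 0 < cfx p y /\
  (if odd (size p) then cfx p y < cfx p x else cfx p x < cfx p y).
Proof.
move=> Hx Hxy; elim: p => [|q p [H1 [H2 H3]]] /=.
  by split => //; split => //; apply: lt_trans Hxy.
have Hq : 0 <= q%:R :> rat by [].
have Hi1 : 0 < (cfx p x)^-1 by rewrite invr_gt0.
have Hi2 : 0 < (cfx p y)^-1 by rewrite invr_gt0.
split; first lra.
split; first lra.
by case: (odd (size p)) H3 => /= H3; rewrite ?ltrD2l ?ltf_pV2 ?posrE.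
Qed.

Lemma seq_dir_dec (S T : seq dir) : {S = T} + {S <> T}.
Proof. decide equality; decide equality. Qed.

Arguments lt_in_val {T S}.
Arguments lt_in_r {T S}.
Arguments closest_L {S T}.
Arguments closest_R {S T}.
Arguments lt_in_total {T S}.

Lemma order_iff S S' : val S < val S' <-> rS S < rS S'.
Proof.
case: (seq_dir_dec S S') => [<-|NE]; first by rewrite !ltxx.
case: (lt_in_total NE) => H.
- by split => _; [apply: lt_in_r | apply: lt_in_val].
- have h1 := lt_in_val H; have h2 := lt_in_r H.
  split => h; [by move: (lt_trans h h1); rewrite ltxx|
               by move: (lt_trans h h2); rewrite ltxx].
Qed.

Theorem theorem4 :
  (* (a) *)
  (forall S : seq dir, fC (tC_label S) = S) /\
  (* (b) *)
  (forall (p : seq nat) (a b : nat), inC (p ++ [:: a]) -> inC (p ++ [:: b]) -> (a < b)%N ->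
     if odd (size p) then cf (p ++ [:: b]) < cf (p ++ [:: a])
     else cf (p ++ [:: a]) < cf (p ++ [:: b])) /\
  (* (c) *)
  ((forall v w, inC v -> inC w -> fC v = fC w -> v = w) /\
   (forall S : seq dir, exists v, inC v /\ fC v = S) /\
   (forall S : seq dir, size (fC (tC_label S)) = size S) /\
   (forall v, inC v -> fC (tC_child Lm v) = rcons (fC v) Lm /\
                       fC (tC_child Rm v) = rcons (fC v) Rm) /\
   (forall v w, inC v -> inC w -> (cf v < cf w <-> rS (fC v) < rS (fC w)))) /\
  (* (d) *)
  (forall S : seq dir,
     let x := Fin (cf (tC_label S)) in
     (inA (size S) (gval (P_L S)) /\ ltE (gval (P_L S)) x /\
        (forall a, inA (size S) a -> ltE a x -> leE a (gval (P_L S)))) /\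
     (inA (size S) (gval (P_R S)) /\ ltE x (gval (P_R S)) /\
        (forall a, inA (size S) a -> ltE x a -> leE (gval (P_R S)) a))).
Proof.
split; first exact: partA.
split.
  move=> p a b [Sa Ea] _ Hab.
  have [p' [q [E Hq]]] := label_shape Sa.
  have Haq : a = q.
    by move: (congr1 (last 0%N) Ea); rewrite E last_cat last_rcons.
  have Hb : (0 < b)%N by lia.
  rewrite !cats1 !cf_rcons.
  have := @cfx_mono p a%:R b%:R; rewrite ltr0n ltr_nat Haq => /(_ Hq).
  by rewrite -Haq => /(_ Hab) [_ [_ ]].
split.
  split.
    by move=> v w [S <-] [S' <-]; rewrite !partA => ->.
  split; first by move=> S; exists (tC_label S); split; [exists S|exact: partA].
  split; first by move=> S; rewrite partA.
  split.
    by move=> v [S <-]; rewrite -!label_rcons !partA.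
  by move=> v w [S <-] [S' <-]; rewrite !partA; exact: order_iff.
move=> S x; have [L1 L2] := local S.
have HsP : forall P X, P_L S = GStr P -> S = P ++ X -> (size P < size S)%N -> True by [].
split.
  split.
    case: (PL_shape S) => [[-> _]|[P [k [-> EP]]]]; first by left.
    by right; right; exists P; split => //; rewrite EP size_cat /= addnS ltnS leq_addr.
  split => // a [->|[->|[T [HT ->]]]] //= Ha.
  - case: (PL_shape S) => [[-> _]|[P [k [-> EP]]]]; first by left.
    by right; apply: (val_pos P).
  - have NE : T <> S by move=> E; move: HT; rewrite E ltnn.
    case: (lt_in_total NE) => H.
      have [P [-> [<-|HP]]] := closest_L H HT; first by left.
      by right; apply: lt_in_val.
    by have := lt_in_val H; rewrite /val => h; move: (lt_trans h Ha); rewrite ltxx.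
split.
  case: (PR_shape S) => [[-> _]|[P [k [-> EP]]]]; first by right; left.
  by right; right; exists P; split => //; rewrite EP size_cat /= addnS ltnS leq_addr.
split => // a [->|[->|[T [HT ->]]]] //= Ha.
- by have := val_pos S; rewrite /val => h; move: (lt_trans h Ha); rewrite ltxx.
- by case: (gval (P_R S)) => [y|]; [right|left].
- have NE : T <> S by move=> E; move: HT; rewrite E ltnn.
  case: (lt_in_total NE) => H.
    by have := lt_in_val H; rewrite /val => h; move: (lt_trans h Ha); rewrite ltxx.
  have [P [-> [<-|HP]]] := closest_R H HT; first by left.
  by right; apply: lt_in_val.
Qed.
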